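(* Let $\{B_i\}_{i \in I}$ be a finite family of subsets of an $n$-element set $\Omega$, let $m \in \{0,\dots,\lfloor n/2\rfloor\}$, let $R$ be a uniformly chosen random $m$-element subset of $\Omega$, and let $\mathcal{B}$ be the event that $B_i \not\subseteq R$ for all $i \in I$. Then for every $\eta \in (0,1)$, \[ \Pr(\mathcal{B}) \ge \prod_{i \in I}\left(1 - \left(\frac{(1+\eta)m}{n}\right)^{|B_i|}\right) - \exp(-\eta^2 m/4). \] *)

(* Defs.v *)
From HB Require Import structures.
From mathcomp Require Import all_boot all_order all_algebra.
From mathcomp Require Import all_classical all_reals all_analysis.
Set Implicit Arguments. Unset Strict Implicit. Unset Printing Implicit Defensive.
Import Order.TTheory GRing.Theory Num.Theory.
Local Open Scope ring_scope.

Definition msubsets (Omega : finType) (m : nat) : {set {set Omega}} :=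
  [set S : {set Omega} | #|S| == m].

Definition unif_prob (Rr : realType) (Omega : finType) (m : nat)
    (E : pred {set Omega}) : Rr :=
  #|[set S in msubsets Omega m | E S]|%:R / #|msubsets Omega m|%:R.

Definition avoid_all (Omega I : finType) (B : I -> {set Omega})
    : pred {set Omega} :=
  fun S => [forall i, ~~ (B i \subset S)].

(* Main.v *)
Require Import Defs.
From HB Require Import structures.
From mathcomp Require Import all_boot all_order all_algebra.
From mathcomp Require Import all_classical all_reals all_analysis.
From mathcomp Require Import ring lra zify.
Import Order.TTheory GRing.Theory Num.Theory numFieldNormedType.Exports.
Local Open Scope ring_scope.
Lemma expR_ge2 (R : realType) (x : R) : 0 <= x -> 1 + x + x ^+ 2 / 2 <= expR x.
Proof.
move=> x0; case: (eqVneq x 0) => [->|xn0]; first by rewrite expR0; lra.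
have xp : 0 < x by rewrite lt_def xn0.
pose f := fun y : R => expR y - y ^+ 2 / 2.
have df : forall y : R, is_derive y (1:R) f (expR y - y).
  move=> y; rewrite /f.
  apply: is_derive_eq.
  rewrite !scaler0 add0r /GRing.scale /= !mulr1.
  lra.
have [] := @MVT R f (fun y => expR y - y) 0 x xp (fun y _ => df y).
  have cf : continuous f.
    move=> z; apply: differentiable_continuous.
    apply/derivable1_diffP; have := df z; by case.
  exact: continuous_subspaceT.
move=> c; rewrite in_itv/= => /andP[c0 cx].
rewrite /f expR0 subr0 => E.
have h := expR_ge1Dx c.
have : f x = 1 + (expR c - c) * x by rewrite /f -E expr0n /=; lra.
rewrite /f => E2.
nra.
Qed.
Fixpoint Ep (R : realType) (T : finType) (p : R) (s : seq T) (h : {set T} -> R) : R :=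
  match s with
  | [::] => h finset.set0
  | x :: s' => p * Ep R T p s' (fun S => h (x |: S)) + (1 - p) * Ep R T p s' h
  end.
Arguments Ep {R T} p s h.

Lemma Ep_ext {R : realType} {T : finType} (p : R) (s : seq T) (h1 h2 : {set T} -> R) :
  (forall S, h1 S = h2 S) -> Ep p s h1 = Ep p s h2.
Proof.
elim: s h1 h2 => [|x s IH] h1 h2 H /=; first exact: H.
by rewrite (IH _ (fun S => h2 (x |: S))) // (IH h1 h2).
Qed.

Lemma Ep_le {R : realType} {T : finType} (p : R) (s : seq T) (h1 h2 : {set T} -> R) :
  0 <= p -> p <= 1 -> (forall S, h1 S <= h2 S) -> Ep p s h1 <= Ep p s h2.
Proof.
move=> p0 p1; elim: s h1 h2 => [|x s IH] h1 h2 H /=; first exact: H.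
apply: lerD; apply: ler_wpM2l; rewrite ?subr_ge0 //; exact: IH.
Qed.

Lemma Ep_lin {R : realType} {T : finType} (p : R) (s : seq T) (c1 c2 : R)
  (h1 h2 : {set T} -> R) :
  Ep p s (fun S => c1 * h1 S + c2 * h2 S) = c1 * Ep p s h1 + c2 * Ep p s h2.
Proof.
elim: s h1 h2 => [|x s IH] h1 h2 //=.
rewrite (IH (fun S => h1 (x |: S)) (fun S => h2 (x |: S))) IH; ring.
Qed.

Lemma Ep_cst {R : realType} {T : finType} (p : R) (s : seq T) (c : R) :
  Ep p s (fun _ => c) = c.
Proof. by elim: s => [|x s IH] //=; rewrite IH; ring. Qed.

Lemma Ep_scale {R : realType} {T : finType} (p : R) (s : seq T) (c : R)
  (h : {set T} -> R) : Ep p s (fun S => c * h S) = c * Ep p s h.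
Proof.
rewrite (Ep_ext _ _ _ (fun S => c * h S + 0 * h S)); last by move=> S; ring.
by rewrite Ep_lin; ring.
Qed.

Lemma Ep_sum {R : realType} {T : finType} (p : R) (s : seq T) (J : Type)
  (r : seq J) (F : J -> {set T} -> R) :
  Ep p s (fun S => \sum_(j <- r) F j S) = \sum_(j <- r) Ep p s (F j).
Proof.
elim: r => [|j r IH].
  by rewrite (Ep_ext _ _ _ (fun _ => 0)) ?Ep_cst ?big_nil // => S; rewrite big_nil.
rewrite big_cons -IH (Ep_ext _ _ _ (fun S => 1 * F j S + 1 * \sum_(j <- r) F j S)).
  by rewrite Ep_lin !mul1r.
by move=> S; rewrite big_cons !mul1r.
Qed.

Definition decr {R : realType} {T : finType} (f : {set T} -> R) :=
  forall S S' : {set T}, S \subset S' -> f S' <= f S.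

Lemma Ep_harris {R : realType} {T : finType} (p : R) (s : seq T) (f g : {set T} -> R) :
  0 <= p -> p <= 1 -> decr f -> decr g ->
  Ep p s f * Ep p s g <= Ep p s (fun S => f S * g S).
Proof.
move=> p0 p1; elim: s f g => [|x s IH] f g df dg //=.
have d1 : forall h : {set T} -> R, decr h -> decr (fun S => h (x |: S)).
  by move=> h dh S S' sS; apply: dh; apply: finset.setUS.
have l1 : forall h : {set T} -> R, decr h -> Ep p s (fun S => h (x |: S)) <= Ep p s h.
  by move=> h dh; apply: Ep_le => // S; apply: dh; apply: finset.subsetUr.
have h1 := IH _ _ (d1 _ df) (d1 _ dg).
have h2 := IH _ _ df dg.
have la := l1 _ df. have lb := l1 _ dg.
set a1 := Ep p s (fun S => f (x |: S)) in h1 la *.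
set b1 := Ep p s (fun S => g (x |: S)) in h1 lb *.
set a0 := Ep p s f in h2 la *.
set b0 := Ep p s g in h2 lb *.
set c1 := Ep p s _ in h1 *.
set c0 := Ep p s _ in h2 *.
have q0 : 0 <= 1 - p by rewrite subr_ge0.
have e : 0 <= p * (1 - p) * ((a0 - a1) * (b0 - b1)).
  by apply: mulr_ge0; [apply: mulr_ge0 | apply: mulr_ge0; rewrite subr_ge0].
have : p * a1 * b1 + (1 - p) * a0 * b0 <= p * c1 + (1 - p) * c0.
  by rewrite -!mulrA; apply: lerD; apply: ler_wpM2l.
nra.
Qed.

Lemma Ep_prodC {R : realType} {T : finType} (p : R) (s : seq T) (C : {set T}) (a b : T -> R) :
  uniq s ->
  Ep p s (fun S => \prod_(y : T) (if y \in C :|: S then a y else b y)) =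
  \prod_(y : T) (if y \in C then a y else if y \in s then p * a y + (1 - p) * b y else b y).
Proof.
elim: s C => [|x s IH] C /= us.
  by apply: eq_bigr => y _; rewrite finset.setU0; case: (y \in C).
move/andP: us => [xs us].
rewrite (Ep_ext _ _ _ (fun S => \prod_(y : T) (if y \in (x |: C) :|: S then a y else b y))); last first.
  by move=> S; rewrite finset.setUCA finset.setUA.
rewrite !IH //.
case xC: (x \in C).
  have -> : x |: C = C by apply/finset.setUidPr; rewrite finset.sub1set.
  have -> : \prod_(y : T) (if y \in C then a y else if y \in x :: s then p * a y + (1 - p) * b y else b y)
          = \prod_(y : T) (if y \in C then a y else if y \in s then p * a y + (1 - p) * b y else b y).
    apply: eq_bigr => y _; case yC: (y \in C) => //.
    rewrite in_cons; case: (eqVneq y x) => [yx|//]; by rewrite yx xC in yC.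
  ring.
set G := fun y => if y \in C then a y else if y \in s then p * a y + (1 - p) * b y else b y.
have E1 : \prod_(y : T) (if y \in x |: C then a y else if y \in s then p * a y + (1 - p) * b y else b y)
    = a x * \prod_(y | y != x) G y.
  rewrite (bigD1 x) //= finset.setU11; congr (_ * _).
  by apply: eq_bigr => y /negbTE yx; rewrite finset.in_setU1 yx.
have E2 : \prod_(y : T) G y = b x * \prod_(y | y != x) G y.
  by rewrite (bigD1 x) //= /G xC (negbTE xs).
have E3 : \prod_(y : T) (if y \in C then a y else if y \in x :: s then p * a y + (1 - p) * b y else b y)
    = (p * a x + (1 - p) * b x) * \prod_(y | y != x) G y.
  rewrite (bigD1 x) //= xC in_cons eqxx /=; congr (_ * _).
  by apply: eq_bigr => y /negbTE yx; rewrite in_cons yx.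
rewrite E1 -/G E2 E3; ring.
Qed.

Lemma Ep_prod {R : realType} {T : finType} (p : R) (a b : T -> R) :
  Ep p (enum T) (fun S => \prod_(y : T) (if y \in S then a y else b y)) =
  \prod_(y : T) (p * a y + (1 - p) * b y).
Proof.
rewrite (Ep_ext _ _ _ (fun S => \prod_(y : T) (if y \in finset.set0 :|: S then a y else b y))); last first.
  by move=> S; rewrite finset.set0U.
rewrite Ep_prodC ?enum_uniq //; apply: eq_bigr => y _.
by rewrite finset.in_set0 mem_enum.
Qed.

Lemma Ep_sub {R : realType} {T : finType} (p : R) (B : {set T}) :
  Ep p (enum T) (fun S => (B \subset S)%:R) = p ^+ #|B|.
Proof.
rewrite (Ep_ext _ _ _ (fun S => \prod_(y : T) (if y \in S then 1 else (y \notin B)%:R))); last first.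
  move=> S; case: (boolP (B \subset S)) => H.
    rewrite big1 // => y _; case: ifP => // yS.
    case: (boolP (y \in B)) => // yB.
    by have := fintype.subsetP H y yB; rewrite yS.
  have [y yB yS] := fintype.subsetPn H.
  by rewrite (bigD1 y) //= (negbTE yS) yB /= mul0r.
rewrite Ep_prod -prodr_const [RHS]big_mkcond /=; apply: eq_bigr => y _.
by case: (y \in B) => /=; ring.
Qed.

Lemma Ep_pow {R : realType} {T : finType} (p t : R) :
  Ep p (enum T) (fun S => t ^+ #|S|) = (p * t + (1 - p)) ^+ #|T|.
Proof.
rewrite (Ep_ext _ _ _ (fun S => \prod_(y : T) (if y \in S then t else 1))); last first.
  by move=> S; rewrite -big_mkcond prodr_const.
rewrite Ep_prod -prodr_const; apply: eq_bigr => y _; ring.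
Qed.

Definition wt {R : realType} {T : finType} (p : R) (S : {set T}) : R :=
  p ^+ #|S| * (1 - p) ^+ (#|T| - #|S|).

Lemma Ep_pt {R : realType} {T : finType} (p : R) (S0 : {set T}) :
  Ep p (enum T) (fun S => (S == S0)%:R) = wt p S0.
Proof.
rewrite (Ep_ext _ _ _ (fun S => \prod_(y : T) (if y \in S then (y \in S0)%:R else (y \notin S0)%:R))); last first.
  move=> S; case: (eqVneq S S0) => [->|ne].
    by rewrite big1 // => y _; case: (y \in S0).
  case: (boolP [exists y, (y \in S) != (y \in S0)]) => [/existsP [y hy] | /existsPn hall].
    rewrite (bigD1 y) //=.
    by move: hy; case: (y \in S); case: (y \in S0) => //= _; rewrite mul0r.
  case/eqP: ne; apply/setP => y; have := hall y.
  by case: (y \in S); case: (y \in S0).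
rewrite Ep_prod (bigID (fun y => y \in S0)) /= /wt.
have cC : #|~: S0| = (#|T| - #|S0|)%N by have := cardsC S0; lia.
congr (_ * _).
  rewrite -prodr_const; apply: eq_bigr => y -> /=; ring.
rewrite -cC -prodr_const; apply: eq_big => [y|y]; first by rewrite finset.in_setC.
by move/negbTE => -> /=; ring.
Qed.

Lemma Ep_expand {R : realType} {T : finType} (p : R) (h : {set T} -> R) :
  Ep p (enum T) h = \sum_(S0 : {set T}) h S0 * wt p S0.
Proof.
rewrite (Ep_ext _ _ _ (fun S => \sum_(S0 : {set T}) h S0 * (S == S0)%:R)); last first.
  move=> S; rewrite (bigD1 S) //= eqxx mulr1 big1 ?addr0 // => S0 /negbTE ne.
  by rewrite eq_sym ne mulr0.
rewrite (Ep_sum p (enum T) _ (index_enum _) (fun S0 S => h S0 * (S == S0)%:R)).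
by apply: eq_bigr => S0 _; rewrite Ep_scale Ep_pt.
Qed.

Lemma Ep_ge0 {R : realType} {T : finType} (p : R) (s : seq T) (h : {set T} -> R) :
  0 <= p -> p <= 1 -> (forall S, 0 <= h S) -> 0 <= Ep p s h.
Proof.
move=> p0 p1 H; rewrite -(Ep_cst p s 0); exact: Ep_le.
Qed.

Lemma harris_prod {R : realType} {T : finType} (p : R) (s : seq T) (I : Type)
  (r : seq I) (f : I -> {set T} -> R) :
  0 <= p -> p <= 1 -> (forall i, decr (f i)) -> (forall i S, 0 <= f i S) ->
  \prod_(i <- r) Ep p s (f i) <= Ep p s (fun S => \prod_(i <- r) f i S).
Proof.
move=> p0 p1 df f0; elim: r => [|i r IH].
  by rewrite big_nil (Ep_ext _ _ _ (fun _ => 1)) ?Ep_cst // => S; rewrite big_nil.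
rewrite big_cons (Ep_ext p s (fun S => \prod_(j <- i :: r) f j S) (fun S => f i S * \prod_(j <- r) f j S)); last first.
  by move=> S; rewrite big_cons.
apply: le_trans (Ep_harris _ _ _ _ p0 p1 (df i) _).
  by apply: ler_wpM2l => //; apply: Ep_ge0.
move=> S S' sS; apply: ler_prod => j _; rewrite f0 /=; exact: df.
Qed.

Lemma avoid_prod {R : realType} {T I : finType} (B : I -> {set T}) (S : {set T}) :
  ((avoid_all B S)%:R : R) = \prod_(i : I) ((~~ (B i \subset S))%:R : R).
Proof.
rewrite /avoid_all; case: (boolP [forall i, ~~ (B i \subset S)]) => [/forallP H| /forallPn [i Hi]].
  by rewrite big1 // => i _; rewrite H.
by rewrite (bigD1 i) //= (negbTE Hi) mul0r.
Qed.

Lemma harris_part {R : realType} {T I : finType} (p : R) (B : I -> {set T}) :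
  0 <= p -> p <= 1 ->
  \prod_(i : I) (1 - p ^+ #|B i|) <= Ep p (enum T) (fun S => (avoid_all B S)%:R).
Proof.
move=> p0 p1.
rewrite (Ep_ext _ _ _ _ (avoid_prod B)).
have E : forall i, Ep p (enum T) (fun S => ((~~ (B i \subset S))%:R : R)) = 1 - p ^+ #|B i|.
  move=> i; rewrite (Ep_ext _ _ _ (fun S => 1 * 1 + (-1) * (B i \subset S)%:R)); last first.
    by move=> S; case: (B i \subset S) => /=; ring.
  by rewrite Ep_lin Ep_cst Ep_sub; ring.
under eq_bigr do rewrite -E.
apply: harris_prod => //.
  move=> i S S' sS; case: (boolP (B i \subset S)) => H /=.
    by rewrite (fintype.subset_trans H sS).
  by case: (B i \subset S').
Qed.

Definition lay {R : realType} {T : finType} (h : {set T} -> R) (k : nat) : R :=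
  \sum_(S : {set T} | #|S| == k) h S.

Lemma reindex_x {R : realType} {T : finType} (h : {set T} -> R) (k : nat) (x : T) :
  \sum_(S : {set T} | (#|S| == k.+1) && (x \in S)) h (S :\ x) =
  \sum_(S : {set T} | (#|S| == k) && (x \in ~: S)) h S.
Proof.
rewrite (reindex_onto (fun S => x |: S) (fun S => S :\ x)); last first.
  by move=> S /andP[_ xS]; rewrite finset.setD1K.
apply: eq_big => S.
  case: (boolP (x \in S)) => xS.
    have ne : ((x |: S) :\ x == S) = false.
      by apply/negbTE/eqP => E; have := finset.setD11 x (x |: S); rewrite E xS.
    by rewrite ne !andbF finset.inE xS andbF.
  rewrite finset.setU1K // eqxx finset.setU11 finset.cardsU1 xS /=.
  have -> : (x \in ~: S) = true by rewrite finset.inE xS.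
  by rewrite !andbT add1n eqSS.
by move=> /andP[_ /eqP ->].
Qed.

Lemma lay_step {R : realType} {T : finType} (h : {set T} -> R) (k : nat) :
  decr h -> (k < #|T|)%N ->
  k.+1%:R * lay h k.+1 <= (#|T| - k)%:R * lay h k.
Proof.
move=> dh kn; rewrite /lay !mulr_sumr.
have -> : \sum_(S : {set T} | #|S| == k.+1) k.+1%:R * h S
        = \sum_(S : {set T} | #|S| == k.+1) \sum_(x in S) h S.
  by apply: eq_bigr => S /eqP cS; rewrite sumr_const cS mulr_natl.
have -> : \sum_(S : {set T} | #|S| == k) (#|T| - k)%:R * h S
        = \sum_(S : {set T} | #|S| == k) \sum_(x in ~: S) h S.
  apply: eq_bigr => S /eqP cS; rewrite sumr_const mulr_natl.
  by have := finset.cardsC S; rewrite cS => <-; rewrite addKn.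
apply: (@le_trans _ _ (\sum_(S : {set T} | #|S| == k.+1) \sum_(x in S) h (S :\ x))).
  apply: ler_sum => S _; apply: ler_sum => x _; apply: dh; exact: finset.subD1set.
rewrite (exchange_big_dep xpredT) //= [leRHS](exchange_big_dep xpredT) //=.
by apply: ler_sum => x _; rewrite reindex_x.
Qed.

Lemma lay_mono {R : realType} {T : finType} (h : {set T} -> R) (m d : nat) :
  decr h -> (m + d <= #|T|)%N ->
  'C(#|T|, m)%:R * lay h (m + d) <= 'C(#|T|, m + d)%:R * lay h m.
Proof.
move=> dh; elim: d => [|d IH] hd; first by rewrite addn0 mulrC.
have hd' : (m + d < #|T|)%N by rewrite addnS in hd.
have IH' := IH (ltnW hd').
rewrite addnS.
set k := (m + d)%N in hd' IH' *.
have st := lay_step h k dh hd'.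
have bin : (k.+1%:R * 'C(#|T|, k.+1)%:R : R) = (#|T| - k)%:R * 'C(#|T|, k)%:R.
  by rewrite -!natrM mul_bin_left.
have c0 : (0 : R) <= 'C(#|T|, m)%:R by [].
have nk0 : (0 : R) <= (#|T| - k)%:R by [].
have k0 : (0 : R) < k.+1%:R by rewrite ltr0n.
rewrite -(ler_pM2l k0).
apply: (@le_trans _ _ ('C(#|T|, m)%:R * ((#|T| - k)%:R * lay h k))).
  by rewrite mulrCA; apply: ler_wpM2l.
apply: (@le_trans _ _ ((#|T| - k)%:R * ('C(#|T|, k)%:R * lay h m))).
  by rewrite mulrCA; apply: ler_wpM2l.
by rewrite mulrA -bin mulrA.
Qed.

Lemma part_card {R : realType} {T : finType} (G : {set T} -> R) :
  \sum_(S : {set T}) G S = \sum_(k < #|T|.+1) \sum_(S : {set T} | #|S| == k) G S.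
Proof.
rewrite (partition_big (fun S : {set T} => (inord #|S| : 'I_#|T|.+1)) xpredT) //=.
apply: eq_bigr => k _; apply: eq_bigl => S.
by rewrite -val_eqE /= inordK // ltnS max_card.
Qed.

Lemma unif_part {R : realType} {T : finType} (p : R) (h : {set T} -> R) (m : nat) :
  0 <= p -> p <= 1 -> decr h -> (forall S, 0 <= h S <= 1) -> (m <= #|T|)%N ->
  Ep p (enum T) h <= Ep p (enum T) (fun S => ((#|S| < m)%N)%:R) + lay h m / 'C(#|T|, m)%:R.
Proof.
move=> p0 p1 dh h01 mn.
set Cm : R := 'C(#|T|, m)%:R.
set Pm := lay h m / Cm.
have Cm0 : 0 < Cm by rewrite /Cm ltr0n bin_gt0.
have Pm0 : 0 <= Pm.
  by apply: divr_ge0; [apply: sumr_ge0 => S _; case/andP: (h01 S) | exact: ltW].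
have w0 : forall S : {set T}, 0 <= wt p S.
  by move=> S; rewrite /wt; apply: mulr_ge0; apply: exprn_ge0; rewrite ?subr_ge0.
have sw : \sum_(S : {set T}) wt p S = 1.
  have := Ep_expand p (fun _ : {set T} => (1 : R)); rewrite Ep_cst => ->.
  by apply: eq_bigr => S _; rewrite mul1r.
rewrite !Ep_expand.
apply: (@le_trans _ _ (\sum_(S : {set T}) (((#|S| < m)%N)%:R * wt p S
                                + ((m <= #|S|)%N)%:R * h S * wt p S))).
  apply: ler_sum => S _; have := w0 S; case/andP: (h01 S) => h0 h1.
  case: (ltnP #|S| m) => H /= w; rewrite ?mul1r ?mul0r ?add0r ?addr0 //.
  by rewrite -[leRHS]mul1r; apply: ler_wpM2r.
rewrite big_split lerD2l.
apply: (@le_trans _ _ (\sum_(S : {set T}) ((m <= #|S|)%N)%:R * wt p S * Pm)).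
  rewrite part_card [leRHS]part_card; apply: ler_sum => k _.
  case: (leqP m k) => mk; last first.
    rewrite !big1 // => S /eqP ->; by rewrite leqNgt mk /= !mul0r.
  have kn : (k <= #|T|)%N by rewrite -ltnS ltn_ord.
  set wk : R := p ^+ k * (1 - p) ^+ (#|T| - k).
  rewrite (eq_bigr (fun S => wk * h S)); last first.
    by move=> S /eqP cS; rewrite /wt cS mk /= mul1r mulrC.
  rewrite [leRHS](eq_bigr (fun S => wk * Pm)); last first.
    by move=> S /eqP cS; rewrite /wt cS mk /= mul1r.
  rewrite -mulr_sumr.
  rewrite (eq_bigl (fun S => S \in [set S : {set T} | #|S| == k])); last first.
    by move=> S; rewrite finset.inE.
  rewrite sumr_const card_draws -mulr_natr -mulrA.
  have wk0 : 0 <= wk by apply: mulr_ge0; apply: exprn_ge0; rewrite ?subr_ge0.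
  apply: ler_wpM2l => //.
  have L := lay_mono h m (k - m) dh.
  rewrite subnKC // in L; have {L} L := L kn.
  rewrite /Pm mulrC mulrA ler_pdivlMr //.
  rewrite -/(lay h k) [X in X <= _]mulrC; exact: L.
rewrite -mulr_suml -[leRHS]mul1r; apply: ler_wpM2r => //.
rewrite -[leRHS]sw; apply: ler_sum => S _; have := w0 S.
by case: (m <= #|S|)%N => /= w; rewrite ?(mulr1n, mulr0n, mul1r, mul0r).
Qed.

Lemma chernoff {R : realType} {T : finType} (p t : R) (m : nat) :
  0 <= p -> p <= 1 -> 0 < t -> t <= 1 ->
  Ep p (enum T) (fun S => ((#|S| < m)%N)%:R) <= (p * t + (1 - p)) ^+ #|T| / t ^+ m.
Proof.
move=> p0 p1 t0 t1.
have tm0 : 0 < t ^+ m by apply: exprn_gt0.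
apply: (@le_trans _ _ (Ep p (enum T) (fun S => (t ^+ m)^-1 * t ^+ #|S|))).
  apply: Ep_le => // S; case: (ltnP #|S| m) => H /=.
    rewrite mulr1n mulrC ler_pdivlMr // mul1r.
    by apply: ler_wiXn2l => //; [exact: ltW | exact: ltnW].
  by rewrite mulr0n; apply: mulr_ge0; [rewrite invr_ge0; exact: ltW | apply: exprn_ge0; exact: ltW].
by rewrite Ep_scale Ep_pow mulrC.
Qed.

Lemma num_bound {R : realType} (eta : R) (m n : nat) :
  0 < eta -> eta < 1 -> (0 < m)%N -> (1 + eta) * m%:R <= n%:R ->
  ((1 + eta) * m%:R / n%:R * expR (- (eta / 2)) + (1 - (1 + eta) * m%:R / n%:R)) ^+ n
    / expR (- (eta / 2)) ^+ m <= expR (- (eta ^+ 2 * m%:R / 4)).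
Proof.
move=> e0 e1 m0 hmn.
set p := (1 + eta) * m%:R / n%:R.
set u := eta / 2.
set t := expR (- u).
have mR : (0 : R) < m%:R by rewrite ltr0n.
have nR : (0 : R) < n%:R by apply: lt_le_trans hmn; apply: mulr_gt0 => //; lra.
have np : n%:R * p = (1 + eta) * m%:R by rewrite /p mulrCA mulfV ?mulr1 // gt_eqF.
have p0 : 0 <= p by apply: divr_ge0; [apply: mulr_ge0; lra | exact: ltW].
have p1 : p <= 1 by rewrite /p ler_pdivrMr // mul1r.
have u0 : 0 <= u by rewrite /u; lra.
have t0 : 0 < t by apply: expR_gt0.
set E := expR u.
have tE : t = E^-1 by rewrite /t expRN.
have qE := expR_ge2 R u u0; rewrite -/E in qE.
set q := 1 + u + u ^+ 2 / 2 in qE.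
have q0 : 0 < q by rewrite /q; nra.
have E0 : 0 < E by apply: expR_gt0.
have tq : t <= q^-1 by rewrite tE lef_pV2 // posrE.
have key : (u + eta ^+ 2 / 4) * q <= (1 + eta) * (q - 1).
  rewrite /q /u; nra.
have key2 : u + eta ^+ 2 / 4 <= (1 + eta) * (1 - t).
  apply: (@le_trans _ _ ((1 + eta) * (1 - q^-1))); last first.
    apply: ler_wpM2l; lra.
  have -> : (1 + eta) * (1 - q^-1) = ((1 + eta) * (q - 1)) / q.
    by field; rewrite gt_eqF.
  by rewrite ler_pdivlMr.
set y := p * (1 - t).
have base0 : 0 <= p * t + (1 - p) by nra.
have base : p * t + (1 - p) <= expR (- y).
  by have := expR_ge1Dx (- y); rewrite /y; lra.
have pw : (p * t + (1 - p)) ^+ n <= expR (n%:R * - y).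
  by rewrite expRM_natl; apply: lerXn2r => //; rewrite nnegrE ?expR_ge0.
have tm : t ^+ m = expR (m%:R * - u) by rewrite expRM_natl.
rewrite tm.
apply: (@le_trans _ _ (expR (n%:R * - y) / expR (m%:R * - u))).
  by apply: ler_wpM2r => //; rewrite invr_ge0 expR_ge0.
rewrite -expRB ler_expR.
have ny : n%:R * y = (1 + eta) * m%:R * (1 - t) by rewrite /y mulrA np.
have : n%:R * - y - m%:R * - u = - ((1 + eta) * (1 - t) * m%:R) + m%:R * u.
  by rewrite mulrN ny; ring.
move=> ->.
nra.
Qed.

Theorem lemma3p2 (Rr : realType) (Omega I : finType) (B : I -> {set Omega})
  (m : nat) (hm : (m <= #|Omega| %/ 2)%N) (eta : Rr)
  (heta0 : 0 < eta) (heta1 : eta < 1) :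
  \prod_(i : I) (1 - ((1 + eta) * m%:R / #|Omega|%:R) ^+ #|B i|)
    - expR (- (eta ^+ 2 * m%:R / 4))
  <= unif_prob Rr m (avoid_all B).
Proof.
have P0 : forall k, 0 <= unif_prob Rr k (avoid_all B).
  by move=> k; rewrite /unif_prob; apply: divr_ge0.
case: m hm => [|m'] hm.
  rewrite mulr0n mulr0 mul0r mulr0 mul0r oppr0 expR0.
  have : \prod_(i : I) (1 - (0 : Rr) ^+ #|B i|) <= 1.
    apply: prodr_ile1 => i _; case: #|B i| => [|k]; rewrite ?expr0 ?exprS ?mul0r; lra.
  have := P0 0%N; lra.
set mm := m'.+1.
have m0 : (0 < mm)%N by [].
have m2n : (mm * 2 <= #|Omega|)%N by rewrite -leq_divRL.
have mn : (mm <= #|Omega|)%N by apply: leq_trans m2n; rewrite leq_pmulr.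
have mR : (0 : Rr) < mm%:R by rewrite ltr0n.
have m2R : (mm * 2)%:R <= (#|Omega|%:R : Rr) by rewrite ler_nat.
rewrite natrM in m2R.
have hmn : (1 + eta) * mm%:R <= #|Omega|%:R by nra.
have nR : (0 : Rr) < #|Omega|%:R by apply: lt_le_trans hmn; apply: mulr_gt0 => //; lra.
set p := (1 + eta) * mm%:R / #|Omega|%:R.
have p0 : 0 <= p by apply: divr_ge0; [apply: mulr_ge0; lra | exact: ltW].
have p1 : p <= 1 by rewrite /p ler_pdivrMr // mul1r.
have H1 := harris_part p B p0 p1.
have dA : decr (fun S : {set Omega} => ((avoid_all B S)%:R : Rr)).
  move=> S S' sS; case: (boolP (avoid_all B S')) => H'; last first.
    by case: (avoid_all B S).
  have -> : avoid_all B S.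
    rewrite /avoid_all; apply/forallP => i; have := forallP H' i.
    apply: contra => sub; exact: fintype.subset_trans sub sS.
  by [].
have hA01 : forall S : {set Omega}, 0 <= ((avoid_all B S)%:R : Rr) <= 1.
  by move=> S; case: (avoid_all B S) => /=; rewrite ?ler01 ?lexx.
have H2 := unif_part p _ mm p0 p1 dA hA01 mn.
have t0 : (0 : Rr) < expR (- (eta / 2)) by apply: expR_gt0.
have t1 : expR (- (eta / 2)) <= 1 by rewrite expR_le1; lra.
have H3 := chernoff (T := Omega) p (expR (- (eta / 2))) mm p0 p1 t0 t1.
have H4 := num_bound eta mm #|Omega| heta0 heta1 m0 hmn.
have H34 := le_trans H3 H4.
have H5 : lay (fun S : {set Omega} => ((avoid_all B S)%:R : Rr)) mm / 'C(#|Omega|, mm)%:R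
          = unif_prob Rr mm (avoid_all B).
  rewrite /unif_prob /msubsets card_draws; congr (_ / _).
  rewrite /lay (eq_bigr (fun S => if avoid_all B S then 1 else 0)); last first.
    by move=> S _; case: (avoid_all B S).
  rewrite -big_mkcondr.
  rewrite (eq_bigl (fun S => S \in [set S in [set S0 : {set Omega} | #|S0| == mm] | avoid_all B S])); last first.
    by move=> S; rewrite !finset.inE.
  by rewrite sumr_const.
rewrite H5 in H2.
lra.
Qed.
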